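(* Let $N=1$. For every $k>2L$, every window string $\vec n=(n_1,\dots,n_k)$ with $L\ge n_1\ge\cdots\ge n_k\ge1$ and every $\mu\in\{0,1\}^{k-1}$, there exists an index $i$ with $2\le i\le k-1$ and $n_{i-1}=n_i=n_{i+1}$, and consequently $$\mathbf{T}^{(k)}_{\mu}(\vec n)=c\,\mathbf{T}^{(k-2)}_{\mu'}(\vec n')$$ for a scalar $c$ depending only on $k,i,\mu$ (independent of $U_1,\dots,U_L$ and $\tilde O$), where $\vec n'$ is $\vec n$ with the entries $n_{i-1},n_i$ deleted and $\mu'$ is $\mu$ with its $(i-1)$-th and $i$-th entries deleted. In particular every control tensor of order $k>2L$ is contractible to one of order $k-2$, so all single-qubit control tensors reduce to those of order at most $2L$.
   Context: Fix integers $L\ge 1$ and $N\ge 1$, and a set $Q$ of $N$ qubit labels. For $q\in Q$ let $\sigma_z^{[q]}$ denote the Pauli-$Z$ operator acting on qubit $q$ tensored with the identity on all other qubits of $(\mathbb{C}^2)^{\otimes N}$. (Digital control) Let $U_1,\dots,U_L$ be arbitrary unitaries on $(\mathbb{C}^2)^{\otimes N}$ ($U_n$ is the control propagator, constant on the $n$-th time window), and let $\tilde O$ be an arbitrary Hermitian unitary operator on $(\mathbb{C}^2)^{\otimes N}$ (the toggling-frame observable). For $q\in Q$ and $n\in\{1,\dots,L\}$ define $\tilde h_q(n)=U_n^\dagger\sigma_z^{[q]}U_n$ and $\bar h_q(n)=-\tilde O^{-1}\tilde h_q(n)\tilde O$. For $k\ge1$, a window string $\vec n=(n_1,\dots,n_k)$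 with $L\ge n_1\ge\cdots\ge n_k\ge1$, a qubit string $\vec q=(q_1,\dots,q_k)\in Q^k$ and a sign string $\mu\in\{0,1\}^{k-1}$, the (window-framed) control tensor is $$\mathbf{T}^{(k)}_{\vec q;\mu}(\vec n)=\sum_{b\in\{0,1\}^k}(-1)^{\sum_{j=1}^{k-1}\mu_j b_{j+1}}\Big(\prod^{\downarrow}_{i:\,b_i=1}\bar h_{q_i}(n_i)\Big)\Big(\prod^{\uparrow}_{i:\,b_i=0}\tilde h_{q_i}(n_i)\Big),$$ where $\prod^{\downarrow}$ is the ordered product with the index $i$ decreasing from left to right, $\prod^{\uparrow}$ is the ordered product with $i$ increasing from left to right, and an empty product is the identity. When $N=1$ the qubit string is omitted and we write $\mathbf{T}^{(k)}_{\mu}(\vec n)$. *)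

(* Defs.v *)
From HB Require Import structures.
From mathcomp Require Import all_boot all_order all_algebra.
Set Implicit Arguments. Unset Strict Implicit. Unset Printing Implicit Defensive.
Import Order.TTheory GRing.Theory Num.Theory.
Local Open Scope ring_scope.

(* Single qubit (N = 1): operators are 2x2 matrices over a numeric closed
   field C (e.g. the complex numbers). *)

Definition dag (C : numClosedFieldType) (A : 'M[C]_2) : 'M[C]_2 :=
  (map_mx Num.conj A)^T.

Definition unitary_op (C : numClosedFieldType) (A : 'M[C]_2) : Prop :=
  dag A *m A = 1%:M /\ A *m dag A = 1%:M.

Definition herm_op (C : numClosedFieldType) (A : 'M[C]_2) : Prop :=
  dag A = A.

Definition sigmaz (C : numClosedFieldType) : 'M[C]_2 :=
  \matrix_(i < 2, j < 2) (if i == j then (if i == 0 :> nat then 1 else -1) else 0).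

Definition htil (C : numClosedFieldType) (U : nat -> 'M[C]_2) (n : nat) : 'M[C]_2 :=
  dag (U n) *m sigmaz C *m U n.

Definition hbar (C : numClosedFieldType) (U : nat -> 'M[C]_2) (O : 'M[C]_2)
  (n : nat) : 'M[C]_2 :=
  - (invmx O *m htil U n *m O).

(* Control tensor T^{(k)}_mu(ns), k = size ns, written 0-indexed:
   paper index i (1..k) is nth _ _ (i-1).  The sign exponent is
   sum_{j=1}^{k-1} mu_j b_{j+1}, i.e. sum_{j=0}^{k-2} mu`_j b`_(j+1). *)
Definition ctensor (C : numClosedFieldType) (hb ht : nat -> 'M[C]_2)
  (ns : seq nat) (mu : seq bool) : 'M[C]_2 :=
  \sum_(b : (size ns).-tuple bool)
    ((-1) ^+ (\sum_(0 <= j < (size ns).-1) (nth false mu j && nth false b j.+1))%N)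
    *: ((\prod_(i <- rev (iota 0 (size ns)) | nth false b i) hb (nth 0%N ns i))
        * (\prod_(i <- iota 0 (size ns) | ~~ nth false b i) ht (nth 0%N ns i))).

(* delete the (i-1)-th and i-th entries (1-indexed) of a sequence,
   i.e. 0-indexed positions i-2 and i-1 *)
Definition del2 (T : Type) (s : seq T) (i : nat) : seq T :=
  take (i - 2) s ++ drop i s.

(* Main.v *)
Require Import Defs.
From HB Require Import structures.
From mathcomp Require Import all_boot all_order all_algebra.
From mathcomp Require Import zify ring.
Import Order.TTheory GRing.Theory Num.Theory.
Local Open Scope ring_scope.

Section Aux.
Variable C : numClosedFieldType.
Variables hb ht : nat -> 'M[C]_2.

Definition stp (n : nat) (s : bool) (M : 'M[C]_2) : 'M[C]_2 :=
  M * ht n + ((-1) ^+ s) *: (hb n * M).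

Fixpoint ev (ns : seq nat) (f : nat -> bool) (M : 'M[C]_2) : 'M[C]_2 :=
  if ns is n :: ns' then ev ns' (fun j => f j.+1) (stp n (f 0%N) M) else M.

Definition G (ns : seq nat) (f : nat -> bool) (M : 'M[C]_2) : 'M[C]_2 :=
  \sum_(b : (size ns).-tuple bool)
    ((-1) ^+ (\sum_(0 <= j < size ns) (f j && nth false b j))%N)
    *: ((\prod_(i <- rev (iota 0 (size ns)) | nth false b i) hb (nth 0%N ns i))
        * M * (\prod_(i <- iota 0 (size ns) | ~~ nth false b i) ht (nth 0%N ns i))).

Lemma sum_tuple_cons n (F : n.+1.-tuple bool -> 'M[C]_2) :
  \sum_(b : n.+1.-tuple bool) F b =
  \sum_(x : bool) \sum_(t : n.-tuple bool) F [tuple of x :: t].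
Proof.
rewrite pair_big /=.
rewrite (reindex (fun p : bool * n.-tuple bool => [tuple of p.1 :: p.2])) //=.
exists (fun t : n.+1.-tuple bool => (thead t, [tuple of behead t])).
  by move=> [x t] _ /=; congr pair; apply: val_inj.
move=> t _; apply: val_inj => /=.
by case: t => [[|x s] //= _].
Qed.

Lemma iotaS m k : iota m.+1 k = map succn (iota m k).
Proof. by elim: k m => //= k IH m; rewrite IH. Qed.

Lemma G_ev ns f M : G ns f M = ev ns f M.
Proof.
elim: ns f M => [|n ns IH] f M.
  rewrite /G /= (big_pred1 [tuple]) //=; last by move=> t; apply/esym/eqP; exact: tuple0.
  by rewrite big_geq // !big_nil expr0 scale1r mulr1 mul1r.
rewrite /= -IH /G /= sum_tuple_cons big_bool /=.
rewrite -big_split /=; apply: eq_bigr => t _.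
rewrite !(big_nat_recl _ _ _ (leq0n _)) /= !rev_cons !big_rcons /= !big_cons /= iotaS -map_rev !big_map.
rewrite /stp !mulrDr !mulrDl scalerDr addrC; congr (_ + _).
  by rewrite /= !mulr1 andbF add0n !mulrA.
by rewrite /= ?mulr1 andbT exprD mulrC -scalerA -scalerAr -scalerAl !mulrA.
Qed.

Lemma sum_shift (mu b : seq bool) k :
  (\sum_(0 <= j < k.-1) (nth false mu j && nth false b j.+1))%N =
  (\sum_(0 <= j < k) (nth false (false :: mu) j && nth false b j))%N.
Proof.
case: k => [|k] /=; first by rewrite !big_geq.
by rewrite (big_nat_recl _ _ _ (leq0n _)) /=.
Qed.

Lemma ctensor_ev ns mu : ctensor hb ht ns mu = ev ns (nth false (false :: mu)) 1.
Proof.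
rewrite -G_ev /ctensor /G; apply: eq_bigr => b _.
by rewrite mulr1 sum_shift.
Qed.

Lemma evZ ns f c M : ev ns f (c *: M) = c *: ev ns f M.
Proof.
elim: ns f M => [|n ns IH] f M //=; rewrite -IH /stp; f_equal.
by rewrite scalerDr -scalerAl -scalerAr !scalerA mulrC.
Qed.

Lemma ev_cat s1 s2 f M :
  ev (s1 ++ s2) f M = ev s2 (fun j => f (size s1 + j)%N) (ev s1 f M).
Proof. by elim: s1 f M => [|n s1 IH] f M //=; rewrite IH. Qed.

Lemma ev_ext s f g M : (forall j, (j < size s)%N -> f j = g j) -> ev s f M = ev s g M.
Proof.
elim: s f g M => [|n s IH] f g M //= H.
rewrite H //; apply: IH => j Hj; exact: H.
Qed.

Lemma sgn2 (s : bool) : ((-1) ^+ s) * ((-1) ^+ s) = 1 :> C.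
Proof. by case: s; rewrite ?expr1 ?expr0 ?mulrNN mulr1. Qed.

Lemma stp2 n s0 s1 M : hb n * hb n = 1 -> ht n * ht n = 1 ->
  stp n s1 (stp n s0 M) = (1 + (-1) ^+ s0 * (-1) ^+ s1) *: M
     + ((-1) ^+ s0 + (-1) ^+ s1) *: (hb n * M * ht n).
Proof.
move=> HB HT; rewrite /stp.
rewrite mulrDl mulrDr -!scalerAl -!scalerAr !mulrA -(mulrA M) HT mulr1 HB mul1r.
rewrite scalerDr scalerA !scalerDl scale1r -!addrA; congr (_ + _).
by rewrite addrA addrC [(-1) ^+ s1 * _]mulrC.
Qed.

Lemma stp3 n s0 s1 s2 M : hb n * hb n = 1 -> ht n * ht n = 1 ->
  stp n s2 (stp n s1 (stp n s0 M)) =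
  (1 + (-1) ^+ s0 * (-1) ^+ s1 + (-1) ^+ s0 * (-1) ^+ s2 + (-1) ^+ s1 * (-1) ^+ s2)
    *: stp n s0 M.
Proof.
move=> HB HT; rewrite stp2 //.
have -> : hb n * stp n s0 M * ht n = (-1) ^+ s0 *: stp n s0 M.
  rewrite /stp mulrDr mulrDl -!scalerAr -!scalerAl !mulrA HB mul1r -(mulrA _ (ht n)) HT mulr1.
  by rewrite scalerDr scalerA sgn2 scale1r addrC.
rewrite scalerA -scalerDl; congr (_ *: _).
by ring.
Qed.
End Aux.
Lemma sigmaz2 (C : numClosedFieldType) : sigmaz C * sigmaz C = 1.
Proof.
apply/matrixP => i j; rewrite !mxE big_ord_recr big_ord1 !mxE.
case: i => [[|[|i]] //= Hi]; case: j => [[|[|j]] //= Hj]; rewrite /=; ring.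
Qed.

Fixpoint has3 (s : seq nat) : bool :=
  if s is x :: t then
    (if t is y :: (z :: _) then (x == y) && (y == z) else false) || has3 t
  else false.

Lemma has3P s : has3 s -> exists p, (p.+2 < size s)%N /\
  nth 0%N s p = nth 0%N s p.+1 /\ nth 0%N s p.+1 = nth 0%N s p.+2.
Proof.
elim: s => [|x t IH] //=; case/orP.
  case: t {IH} => [|y [|z r]] //= /andP[/eqP -> /eqP ->].
  by exists 0%N.
by case/IH => p [H1 [H2 H3]]; exists p.+1.
Qed.

Lemma no3 s : sorted geq s -> all (fun n => 1 <= n)%N s -> ~~ has3 s ->
  (size s <= 2 * head 0%N s)%N.
Proof.
move: {2}(size s) (leqnn (size s)) => m; elim: m s => [|m IH] [|x t] //= Hm.
case: t Hm => [|y [|z r]] /= Hm.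
- by move=> _ /andP[H _]; lia.
- by move=> /andP[Hxy _] /and3P[H1 H2 _]; lia.
move=> /andP[Hxy Hp] /and4P[H1 H2 H3 Hr] /norP[/nandP Hn Hh].
have [/eqP Exy|Nxy] := boolP (x == y).
- have Hyz : (z < y)%N.
    case: Hn => [/negP//|/eqP Hn]; move: Hp => /= /andP[Hyz _]; lia.
  have := IH (z :: r); rewrite /=.
  move: Hh => /norP[_ Hh3].
  move: Hp => /= /andP[_ Hp].
  move=> /(_ _ Hp _ Hh3); rewrite H3 Hr /=. move=> /(_ _ isT).
  lia.
- have := IH (y :: z :: r); rewrite /= H2 H3 Hr Hh Hp /=.
  move=> /(_ _ isT isT isT). lia.
Qed.

Lemma htil2 (C : numClosedFieldType) (U : nat -> 'M[C]_2) n :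
  unitary_op (U n) -> htil U n * htil U n = 1.
Proof.
move=> [H1 H2]; rewrite /htil !mulmxE; rewrite !mulmxE idmxE in H1 H2.
by rewrite -!mulrA (mulrA (U n)) H2 mul1r (mulrA (sigmaz C)) sigmaz2 mul1r H1.
Qed.

Lemma hbar2 (C : numClosedFieldType) (U : nat -> 'M[C]_2) O n :
  unitary_op (U n) -> unitary_op O -> hbar U O n * hbar U O n = 1.
Proof.
move=> HU [H1 H2]; rewrite /hbar mulrNN.
have := @htil2 _ U n HU; move: (htil U n) => X HX.
have [_ uO] := mulmx1_unit H1.
have E1 := mulmxV uO; have E2 := mulVmx uO.
rewrite !mulmxE idmxE in E1 E2.
rewrite !mulmxE -!mulrA (mulrA O) E1 mul1r.
by rewrite (mulrA X) HX mul1r E2.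
Qed.

Theorem mainTheorem3 (C : numClosedFieldType) :
  exists cf : nat -> nat -> seq bool -> C,
  forall (L k : nat) (ns : seq nat) (mu : seq bool),
    (1 <= L)%N -> (2 * L < k)%N ->
    size ns = k -> size mu = k.-1 ->
    all (fun n => (1 <= n <= L)%N) ns ->
    sorted geq ns ->
    exists i : nat,
      [/\ (2 <= i <= k - 1)%N,
          nth 0%N ns (i - 2) = nth 0%N ns (i - 1),
          nth 0%N ns (i - 1) = nth 0%N ns i &
          forall (U : nat -> 'M[C]_2) (O : 'M[C]_2),
            (forall n, (1 <= n <= L)%N -> unitary_op (U n)) ->
            herm_op O -> unitary_op O ->
            ctensor (hbar U O) (htil U) ns mu
            = cf k i mu *: ctensor (hbar U O) (htil U) (del2 ns i) (del2 mu i)].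
Proof.
pose x (mu : seq bool) j : C := (-1) ^+ (nth false (false :: mu) j).
exists (fun k i mu => 1 + x mu (i - 2)%N * x mu (i - 1)%N + x mu (i - 2)%N * x mu i
                        + x mu (i - 1)%N * x mu i).
move=> L k ns mu HL Hk Hs Hmu Hall Hsort.
have H3 : has3 ns.
  apply/negPn/negP => Hn.
  have Hge : all (fun n => 1 <= n)%N ns.
    by apply: sub_all Hall => y /andP[].
  have := @no3 ns Hsort Hge Hn; rewrite Hs.
  case: ns Hs Hall {Hsort Hge Hn} => [|y t] /= Hs; first by lia.
  by case/andP => /andP[_ Hy] _; lia.
case/has3P: H3 => p [Hp [E1 E2]].
exists p.+2.
have -> : (p.+2 - 2 = p)%N by lia.
have -> : (p.+2 - 1 = p.+1)%N by lia.
split => //; first by lia.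
move=> U O HU Hh HO.
set n := nth 0%N ns p.
have Hn : (1 <= n <= L)%N by apply: (all_nthP 0%N Hall); lia.
have HB := @hbar2 _ U O n (HU n Hn) HO.
have HT := @htil2 _ U n (HU n Hn).
have h0 : (p < size ns)%N by lia.
have h1 : (p.+1 < size ns)%N by lia.
have Ens : ns = take p ns ++ [:: n, n, n & drop p.+3 ns].
  rewrite -{1}(cat_take_drop p ns); congr (_ ++ _).
  by rewrite (drop_nth 0%N h0) (drop_nth 0%N h1) (drop_nth 0%N Hp) -E2 -E1.
have Edel : del2 ns p.+2 = take p ns ++ n :: drop p.+3 ns.
  rewrite /del2 (_ : (p.+2 - 2 = p)%N); last by lia.
  by rewrite (drop_nth 0%N Hp) -E2 -E1.
rewrite !ctensor_ev Edel {1}Ens !ev_cat /= size_take h0.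
have hm : (p < size mu)%N by lia.
have Hd : forall j, nth false (false :: del2 mu p.+2) j =
    if (j <= p)%N then nth false (false :: mu) j else nth false (false :: mu) j.+2.
  move=> [|j] /=; first by [].
  rewrite /del2 (_ : (p.+2 - 2 = p)%N); last by lia.
  rewrite nth_cat size_take hm.
  case: ltnP => Hj.
    by rewrite nth_take.
  by rewrite nth_drop; congr nth; lia.
rewrite stp3 // evZ; congr (_ *: _).
  by rewrite /x !addn0 !addn1 !addn2.
have Epre : ev C (hbar U O) (htil U) (take p ns) (nth false (false :: del2 mu p.+2)) 1
    = ev C (hbar U O) (htil U) (take p ns) (nth false (false :: mu)) 1.
  apply: ev_ext => j; rewrite size_take h0 Hd => Hj.
  by rewrite (leq_trans (ltnW Hj)).
rewrite Epre.
rewrite (Hd (p + 0)%N) addn0 leqnn.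
apply: ev_ext => j _; rewrite Hd.
have -> : (p + j.+1 <= p)%N = false by rewrite addnS ltnNge leq_addr.
by rewrite !addnS.
Qed.
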